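(* Let $(\sigma_n)_{n=1}^\infty$ be a strictly increasing sequence of positive integers with $\sigma_{n+1}\ge\sigma_n+n$ for all $n\ge1$ and $\lim_{n\to\infty}\frac{\sigma_{n+1}-\sigma_n}{n}=\beta$ for some real $\beta\ge1$. Let \[G((\sigma_n)_{n=1}^\infty)=\{x\in J\colon a_{\sigma_n}(x),\ldots,a_{\sigma_n+n-1}(x)\ \text{is an arithmetic progression for all sufficiently large}\ n\}.\] Then $\dim_{\rm H} G((\sigma_n)_{n=1}^\infty)\le\frac{\beta-1}{2\beta}$.
   Context: Every irrational $x\in(0,1)$ has a regular continued fraction expansion with partial quotients $a_n(x)\in\mathbb N$, $n\ge1$. $J=\{x\in(0,1)\setminus\mathbb Q\colon a_n(x)<a_{n+1}(x)\text{ for every }n\ge1\}$. $\dim_{\rm H}$ denotes Hausdorff dimension in $[0,1]$. *)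

(* Defs.v *)
From Stdlib Require Import Reals ZArith ClassicalEpsilon.
From Coquelicot Require Import Coquelicot.
Open Scope R_scope.

(** Floor of a real number (Int_part r = up r - 1 is the floor). *)
Definition floorR (r : R) : Z := Int_part r.

Definition gauss (x : R) : R := / x - IZR (floorR (/ x)).

(** Partial quotients: a_n(x) = floor(1 / T^(n-1) x), for n >= 1
    (the value at n = 0 is irrelevant and never used). *)
Definition cf_a (n : nat) (x : R) : nat :=
  Z.to_nat (floorR (/ Nat.iter (Nat.pred n) gauss x)).

Definition irrational (x : R) : Prop :=
  ~ exists p q : Z, q <> 0%Z /\ x = IZR p / IZR q.

Definition J_set (x : R) : Prop :=
  0 < x < 1 /\ irrational x /\
  forall n : nat, (1 <= n)%nat -> (cf_a n x < cf_a (S n) x)%nat.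

(** Diameter (in Rbar; the empty set gets m_infty). *)
Definition diam (U : R -> Prop) : Rbar :=
  Lub_Rbar (fun r => exists x y, U x /\ U y /\ r = Rabs (x - y)).

(** diam(U)^s, with the conventions diam(empty)^s = 0 and 0^0 = 1. *)
Definition diam_pow (s : R) (U : R -> Prop) : R :=
  if excluded_middle_informative (exists x, U x) then
    (let d := real (diam U) in
     if Req_EM_T d 0 then (if Req_EM_T s 0 then 1 else 0) else Rpower d s)
  else 0.

Definition hausdorff_delta (s delta : R) (E : R -> Prop) : Rbar :=
  Glb_Rbar (fun c => exists U : nat -> R -> Prop,
    (forall i, Rbar_le (diam (U i)) (Finite delta)) /\
    (forall x, E x -> exists i, U i x) /\
    Lim_seq (sum_n (fun i => diam_pow s (U i))) = Finite c).

Definition hausdorff_measure (s : R) (E : R -> Prop) : Rbar :=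
  Lub_Rbar (fun r => exists delta, 0 < delta /\
                       Rbar_le (Finite r) (hausdorff_delta s delta E)).

Definition hausdorff_dim (E : R -> Prop) : Rbar :=
  Glb_Rbar (fun s => 0 <= s /\ hausdorff_measure s E = Finite 0).

Definition is_AP_block (x : R) (m n : nat) : Prop :=
  exists d : Z, forall k : nat, (k < n)%nat ->
    Z.of_nat (cf_a (m + k) x) = (Z.of_nat (cf_a m x) + Z.of_nat k * d)%Z.

Definition G_set (sigma : nat -> nat) (x : R) : Prop :=
  J_set x /\
  exists N : nat, forall n : nat, (1 <= n)%nat -> (N <= n)%nat ->
    is_AP_block x (sigma n) n.

(* Main.v *)
Require Import Defs.
From Stdlib Require Import Reals ZArith Lra Lia List Bool ClassicalEpsilon Cantor.
From Coquelicot Require Import Coquelicot.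
Import ListNotations.
Open Scope R_scope.

Lemma floorR_spec r : IZR (floorR r) <= r < IZR (floorR r) + 1.
Proof. unfold floorR. destruct (base_Int_part r). lra. Qed.

Lemma gauss_spec x : 0 < x < 1 ->
  (1 <= floorR (/ x))%Z /\ 0 <= gauss x < 1 /\ x = / (IZR (floorR (/ x)) + gauss x).
Proof.
  intros Hx. destruct (floorR_spec (/ x)) as [H1 H2].
  assert (Hi : 1 < / x).
  { rewrite <- Rinv_1. apply Rinv_lt_contravar; lra. }
  assert (1 <= floorR (/x))%Z.
  { assert (0 < IZR (floorR (/x)) ) by lra. apply lt_IZR in H. lia. }
  unfold gauss. split; [auto|split;[lra|]].
  replace (IZR (floorR (/ x)) + (/ x - IZR (floorR (/ x)))) with (/x) by ring.
  rewrite Rinv_inv. auto.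
Qed.

Lemma gauss_irr x : 0 < x < 1 -> irrational x -> 0 < gauss x < 1 /\ irrational (gauss x).
Proof.
  intros Hx Hirr. destruct (gauss_spec x Hx) as [Ha [Hg Hxe]].
  set (a := floorR (/x)) in *.
  assert (Hirr2 : irrational (gauss x)).
  { intros [p [q [Hq Hpq]]]. apply Hirr.
    assert (Hgq : gauss x * IZR q = IZR p).
    { rewrite Hpq. field. apply not_0_IZR; auto. }
    (* x = 1/(a + p/q) = q / (a q + p) *)
    exists q, (a * q + p)%Z. split.
    - intro H0. assert (IZR (a*q+p) = 0) by (rewrite H0; auto).
      rewrite plus_IZR, mult_IZR in H. rewrite <- Hgq in H.
      clear H0; assert (H0: IZR q * (IZR a + gauss x) = 0) by lra.
      apply Rmult_integral in H0. destruct H0 as [H3|H3].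
      + apply Hq. apply eq_IZR. auto.
      + assert (1 <= IZR a) by (apply IZR_le; lia). lra.
    - rewrite Hxe. rewrite plus_IZR, mult_IZR, <- Hgq.
      assert (1 <= IZR a) by (apply IZR_le; lia).
      assert (IZR q <> 0) by (apply not_0_IZR; auto).
      replace (IZR a * IZR q + gauss x * IZR q) with (IZR q * (IZR a + gauss x)) by ring.
      field. split; lra. }
  split; [|auto].
  split; [|lra].
  destruct Hg as [[Hg|Hg] _]; auto.
  exfalso. apply Hirr2. exists 0%Z, 1%Z. split. lia. rewrite <- Hg. simpl. field.
Qed.

Lemma cf_a_S n x : (1 <= n)%nat -> cf_a (S n) x = cf_a n (gauss x).
Proof.
  intros Hn. unfold cf_a. destruct n as [|n]. lia. simpl Nat.pred.
  f_equal. f_equal. f_equal. rewrite Nat.iter_succ_r. reflexivity.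
Qed.

Lemma cf_a_1 x : cf_a 1 x = Z.to_nat (floorR (/ x)).
Proof. reflexivity. Qed.

Fixpoint prodR (f : nat -> R) (j0 L : nat) : R :=
  match L with O => 1 | S L' => f j0 * prodR f (S j0) L' end.

Lemma prodR_shift f k L : prodR f (S k) L = prodR (fun j => f (S j)) k L.
Proof. revert k; induction L; intros k; simpl; auto. rewrite IHL; auto. Qed.

Lemma prodR_ext f g k L : (forall j, (k <= j < k + L)%nat -> f j = g j) ->
  prodR f k L = prodR g k L.
Proof.
  revert k; induction L; intros k H; simpl; auto.
  rewrite (H k) by lia. rewrite (IHL (S k)); auto. intros j Hj; apply H; lia.
Qed.

Definition good (x : R) := 0 < x < 1 /\ irrational x.

Lemma cylinder L : forall x y, good x -> good y ->
  (forall j, (1 <= j <= L)%nat -> cf_a j x = cf_a j y) ->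
  Rabs (x - y) <= prodR (fun j => / (INR (cf_a j x))^2) 1 L.
Proof.
  induction L as [|L IH]; intros x y [Hx Hix] [Hy Hiy] Hd.
  - simpl. apply Rabs_le. lra.
  - destruct (gauss_spec x Hx) as [Hax [Hgx Hxe]].
    destruct (gauss_spec y Hy) as [Hay [Hgy Hye]].
    assert (Hxy1 : floorR (/x) = floorR (/y)).
    { specialize (Hd 1%nat ltac:(lia)). rewrite !cf_a_1 in Hd. apply Z2Nat.inj in Hd; lia. }
    destruct (gauss_irr x Hx Hix) as [Hx' Hix'].
    destruct (gauss_irr y Hy Hiy) as [Hy' Hiy'].
    assert (IH' := IH (gauss x) (gauss y) (conj Hx' Hix') (conj Hy' Hiy')).
    assert (Hd' : forall j, (1 <= j <= L)%nat -> cf_a j (gauss x) = cf_a j (gauss y)).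
    { intros j Hj. rewrite <- !cf_a_S by lia. apply Hd. lia. }
    specialize (IH' Hd').
    change (prodR (fun j => / (INR (cf_a j x))^2) 1 (S L)) with (/ (INR (cf_a 1 x))^2 * prodR (fun j => / (INR (cf_a j x))^2) 2 L).
    assert (Hpe : prodR (fun j => / INR (cf_a j x) ^ 2) 2 L =
                  prodR (fun j => / INR (cf_a j (gauss x)) ^ 2) 1 L).
    { rewrite prodR_shift. apply prodR_ext. intros j Hj. rewrite cf_a_S by lia. reflexivity. }
    rewrite Hpe.
    set (P := prodR (fun j => / INR (cf_a j (gauss x)) ^ 2) 1 L) in *.
    set (a := floorR (/ x)) in *.
    assert (HaR : 1 <= IZR a) by (apply IZR_le; lia).
    assert (Hca : INR (cf_a 1 x) = IZR a).
    { rewrite cf_a_1. rewrite INR_IZR_INZ. rewrite Z2Nat.id by lia. reflexivity. }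
    rewrite Hca.
    rewrite Hxe, Hye, <- Hxy1. fold a.
    replace (/ (IZR a + gauss x) - / (IZR a + gauss y)) with
      ((gauss y - gauss x) / ((IZR a + gauss x) * (IZR a + gauss y))) by (field; lra).
    rewrite Rabs_div by nra. rewrite (Rabs_right ((IZR a + gauss x) * (IZR a + gauss y))) by nra.
    rewrite Rabs_minus_sym.
    apply Rle_trans with (Rabs (gauss x - gauss y) / (IZR a ^2)).
    + unfold Rdiv. apply Rmult_le_compat_l. apply Rabs_pos.
      apply Rinv_le_contravar. nra. nra.
    + unfold Rdiv. rewrite (Rmult_comm (Rabs _)). apply Rmult_le_compat_l.
      apply Rlt_le, Rinv_0_lt_compat. nra. auto.
Qed.

Lemma diam_pow_nonneg s U : 0 <= diam_pow s U.
Proof.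
  unfold diam_pow. destruct excluded_middle_informative; [|lra].
  destruct Req_EM_T; [destruct Req_EM_T; lra|].
  unfold Rpower. left. apply exp_pos.
Qed.

Lemma diam_bound s U B : 0 < s -> 0 < B ->
  (forall x y, U x -> U y -> Rabs (x - y) <= B) ->
  Rbar_le (diam U) (Finite B) /\ diam_pow s U <= Rpower B s.
Proof.
  intros Hs HB H.
  assert (Hub : Rbar_le (diam U) (Finite B)).
  { unfold diam. destruct (Lub_Rbar_correct (fun r => exists x y, U x /\ U y /\ r = Rabs (x - y))) as [_ Hl].
    apply Hl. intros r [x [y [Hx [Hy ->]]]]. simpl. apply H; auto. }
  split; auto.
  unfold diam_pow. destruct excluded_middle_informative as [[x0 Hx0]|]; [|unfold Rpower; left; apply exp_pos].
  assert (Hlb : Rbar_le (Finite 0) (diam U)).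
  { unfold diam. destruct (Lub_Rbar_correct (fun r => exists x y, U x /\ U y /\ r = Rabs (x - y))) as [Hu _].
    apply Hu. exists x0, x0. split; auto. split; auto. rewrite Rminus_diag, Rabs_R0. auto. }
  destruct (diam U) as [d| |]; simpl in *; try contradiction.
  destruct Req_EM_T. destruct Req_EM_T. lra. unfold Rpower; left; apply exp_pos.
  apply Rle_Rpower_l. lra. lra.
Qed.

Lemma meas_zero E s : 0 < s ->
  (forall delta eps, 0 < delta -> 0 < eps -> exists U : nat -> R -> Prop,
     (forall i, Rbar_le (diam (U i)) (Finite delta)) /\
     (forall x, E x -> exists i, U i x) /\
     (forall K, sum_f_R0 (fun i => diam_pow s (U i)) K <= eps)) ->
  hausdorff_measure s E = Finite 0.
Proof.
  intros Hs Hcov.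
  assert (Hd : forall delta, 0 < delta -> hausdorff_delta s delta E = Finite 0).
  { intros delta Hdel. unfold hausdorff_delta.
    set (C := fun c => exists U : nat -> R -> Prop,
      (forall i, Rbar_le (diam (U i)) (Finite delta)) /\
      (forall x, E x -> exists i, U i x) /\
      Lim_seq (sum_n (fun i => diam_pow s (U i))) = Finite c).
    destruct (Glb_Rbar_correct C) as [Hlb Hgl].
    apply Rbar_le_antisym.
    -
      assert (Hall : forall eps, 0 < eps -> Rbar_le (Glb_Rbar C) (Finite eps)).
      { intros eps Heps. destruct (Hcov delta eps Hdel Heps) as [U [H1 [H2 H3]]].
        set (u := sum_n (fun i => diam_pow s (U i))).
        assert (Hinc : forall n, u n <= u (S n)).
        { intros n. unfold u. rewrite sum_Sn. simpl. unfold plus; simpl.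
          pose proof (diam_pow_nonneg s (U (S n))). lra. }
        assert (Hbd : forall n, u n <= eps).
        { intros n. unfold u. rewrite sum_n_Reals. apply H3. }
        destruct (ex_finite_lim_seq_correct u) as [Hf _].
        destruct (Hf (ex_finite_lim_seq_incr u eps Hinc Hbd)) as [_ Hfin].
        assert (HC : C (real (Lim_seq u))).
        { exists U. refine (conj H1 (conj H2 _)). unfold u in *. rewrite Hfin. reflexivity. }
        apply Rbar_le_trans with (Finite (real (Lim_seq u))).
        apply Hlb; auto.
        rewrite Hfin. rewrite <- (Lim_seq_const eps).
        apply Lim_seq_le_loc. exists O. intros n _. apply Hbd. }
      destruct (Glb_Rbar C) as [g| |] eqn:Hg; simpl; auto.
      + destruct (Rle_dec g 0) as [|Hn]; auto.
        specialize (Hall (g/2) ltac:(lra)). simpl in Hall. lra.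
      + specialize (Hall 1 ltac:(lra)). simpl in Hall. auto.
    - apply Hgl. intros c [U [_ [_ HU]]].
      rewrite <- HU. rewrite <- (Lim_seq_const 0). apply Lim_seq_le_loc.
      exists O. intros n _. rewrite sum_n_Reals.
      clear. induction n; simpl. apply diam_pow_nonneg.
      pose proof (diam_pow_nonneg s (U (S n))). lra. }
  unfold hausdorff_measure.
  destruct (Lub_Rbar_correct (fun r => exists delta, 0 < delta /\ Rbar_le (Finite r) (hausdorff_delta s delta E))) as [Hu Hl].
  apply Rbar_le_antisym.
  - apply Hl. intros r [delta [Hdel Hr]]. rewrite Hd in Hr; auto.
  - apply Hu. exists 1. split. lra. rewrite Hd by lra. simpl. lra.
Qed.

Lemma dim_le E b : 0 <= b < /2 ->
  (forall s, b < s < /2 -> hausdorff_measure s E = Finite 0) ->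
  Rbar_le (hausdorff_dim E) (Finite b).
Proof.
  intros Hb H. unfold hausdorff_dim.
  set (S := fun s => 0 <= s /\ hausdorff_measure s E = Finite 0).
  destruct (Glb_Rbar_correct S) as [Hlb _].
  assert (Hall : forall s, b < s < /2 -> Rbar_le (Glb_Rbar S) (Finite s)).
  { intros s Hs. apply Hlb. split. lra. apply H; auto. }
  destruct (Glb_Rbar S) as [g| |]; simpl; auto.
  - destruct (Rle_dec g b) as [|Hn]; auto.
    set (s := (b + Rmin g (/2)) / 2).
    assert (b < s < /2).
    { unfold s. unfold Rmin. destruct Rle_dec; lra. }
    specialize (Hall s H0). simpl in Hall. unfold s in Hall. unfold Rmin in Hall.
    destruct Rle_dec; lra.
  - apply (Hall ((b + /2)/2)). lra.
Qed.

Fixpoint ssum (g : nat -> R) (n : nat) : R :=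
  match n with O => 0 | S n' => ssum g n' + g n' end.

Lemma ssum_mono g h n : (forall a, (a < n)%nat -> g a <= h a) -> ssum g n <= ssum h n.
Proof. induction n; simpl; intros H. lra. assert (g n <= h n) by (apply H; lia).
  assert (ssum g n <= ssum h n) by (apply IHn; intros; apply H; lia). lra. Qed.

Lemma ssum_nonneg g n : (forall a, (a < n)%nat -> 0 <= g a) -> 0 <= ssum g n.
Proof. induction n; simpl; intros H. lra. assert (0 <= g n) by (apply H; lia).
  assert (0 <= ssum g n) by (apply IHn; intros; apply H; lia). lra. Qed.

Lemma ssum_ext g h n : (forall a, (a < n)%nat -> g a = h a) -> ssum g n = ssum h n.
Proof. induction n; simpl; intros H. auto. rewrite IHn, H; try lia; auto. Qed.

Lemma ssum_scal c g n : ssum (fun a => c * g a) n = c * ssum g n.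
Proof. induction n; simpl. ring. rewrite IHn. ring. Qed.

Lemma ssum_f_R0 g K : sum_f_R0 g K = ssum g (S K).
Proof. induction K; simpl. ring. rewrite IHK. simpl. ring. Qed.

Definition lsum {A} (f : A -> R) (l : list A) : R := fold_right (fun x acc => f x + acc) 0 l.

Lemma lsum_app {A} (f : A -> R) l1 l2 : lsum f (l1 ++ l2) = lsum f l1 + lsum f l2.
Proof. induction l1; simpl. ring. rewrite IHl1. ring. Qed.

Lemma lsum_nonneg {A} (f : A -> R) l : (forall x, 0 <= f x) -> 0 <= lsum f l.
Proof. intros H; induction l; simpl. lra. specialize (H a). lra. Qed.

Lemma lsum_incl {A} (dec : forall x y : A, {x = y} + {x <> y}) (f : A -> R) l : forall B,
  NoDup l -> incl l B -> (forall x, 0 <= f x) -> lsum f l <= lsum f B.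
Proof.
  induction l as [|x l IH]; intros B Hnd Hinc Hf.
  - simpl. apply lsum_nonneg; auto.
  - inversion Hnd; subst.
    assert (Hx : In x B) by (apply Hinc; left; auto).
    destruct (in_split x B Hx) as [B1 [B2 HB]]. subst B.
    rewrite lsum_app. simpl.
    assert (lsum f l <= lsum f (B1 ++ B2)).
    { apply IH; auto. intros y Hy. assert (Hy' : In y (B1 ++ x :: B2)) by (apply Hinc; right; auto).
      apply in_app_or in Hy'. apply in_or_app. destruct Hy' as [H|[H|H]]; auto.
      subst. contradiction. }
    rewrite lsum_app in H. lra.
Qed.

Lemma lsum_seq g n : lsum g (seq 0 n) = ssum g n.
Proof. induction n. auto. rewrite seq_S, lsum_app, IHn. simpl. ring. Qed.

Lemma lsum_map {A B} (f : B -> R) (h : A -> B) l : lsum f (map h l) = lsum (fun x => f (h x)) l.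
Proof. induction l; simpl; auto. rewrite IHl; auto. Qed.

Lemma lsum_flat_map {A B} (f : B -> R) (h : A -> list B) l :
  lsum f (flat_map h l) = lsum (fun x => lsum f (h x)) l.
Proof. induction l; simpl; auto. rewrite lsum_app, IHl; auto. Qed.

Fixpoint box (L M : nat) : list (list nat) :=
  match L with O => [[]] | S L' => flat_map (fun a => map (cons a) (box L' M)) (seq 0 (S M)) end.

Fixpoint bsum (L M : nat) (f : list nat -> R) : R :=
  match L with O => f [] | S L' => ssum (fun a => bsum L' M (fun l => f (a :: l))) (S M) end.

Lemma lsum_box L M : forall f, lsum f (box L M) = bsum L M f.
Proof.
  induction L; intros f. simpl. ring. cbn [box bsum].
  rewrite lsum_flat_map. rewrite lsum_seq. apply ssum_ext. intros a _.
  rewrite lsum_map. apply IHL.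
Qed.

Lemma in_box L M : forall l, length l = L -> (forall x, In x l -> (x <= M)%nat) -> In l (box L M).
Proof.
  induction L; intros l Hl Hx; destruct l as [|a l]; simpl in Hl; try discriminate.
  - simpl; auto.
  - cbn [box]. apply in_flat_map. exists a. split.
    + apply in_seq. assert (a <= M)%nat by (apply Hx; left; auto). lia.
    + apply in_map. apply IHL. lia. intros x Hx'. apply Hx. right; auto.
Qed.

Lemma bsum_ext L M : forall f g, (forall l, length l = L -> f l = g l) -> bsum L M f = bsum L M g.
Proof.
  induction L; intros f g H; cbn [bsum]. apply H; auto.
  apply ssum_ext. intros a _. apply IHL. intros l Hl. apply H. simpl; lia.
Qed.

Lemma bsum_mono L M : forall f g, (forall l, length l = L -> f l <= g l) -> bsum L M f <= bsum L M g.
Proof.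
  induction L; intros f g H; cbn [bsum]. apply H; auto.
  apply ssum_mono. intros a _. apply IHL. intros l Hl. apply H. simpl; lia.
Qed.

Lemma bsum_nonneg L M : forall f, (forall l, length l = L -> 0 <= f l) -> 0 <= bsum L M f.
Proof.
  induction L; intros f H; cbn [bsum]. apply H; auto.
  apply ssum_nonneg. intros a _. apply IHL. intros l Hl. apply H. simpl; lia.
Qed.

Lemma bsum_scal L M : forall c f, bsum L M (fun l => c * f l) = c * bsum L M f.
Proof.
  induction L; intros c f; cbn [bsum]. auto.
  rewrite <- ssum_scal. apply ssum_ext. intros a _. apply IHL.
Qed.

Lemma bsum_app L1 L2 M : forall f,
  bsum (L1 + L2) M f = bsum L1 M (fun l1 => bsum L2 M (fun l2 => f (l1 ++ l2))).
Proof.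
  induction L1; intros f; cbn [bsum]. auto.
  apply ssum_ext. intros a _. apply IHL1.
Qed.

Fixpoint prodL (phi : nat -> R) (l : list nat) : R :=
  match l with [] => 1 | x :: l' => phi x * prodL phi l' end.

Lemma bsum_prodL L M phi : bsum L M (prodL phi) = (ssum phi (S M)) ^ L.
Proof.
  revert phi. induction L; intros phi. simpl. auto.
  cbn [bsum]. rewrite <- tech_pow_Rmult, <- IHL. rewrite Rmult_comm. rewrite <- ssum_scal.
  apply ssum_ext. intros a _. simpl. rewrite bsum_scal. ring.
Qed.

Fixpoint decodeL (L r : nat) : list nat :=
  match L with O => [] | S L' => let (a, r') := of_nat r in a :: decodeL L' r' end.

Fixpoint encodeL (l : list nat) : nat :=
  match l with [] => O | a :: l' => to_nat (a, encodeL l') end.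

Lemma decode_encode l : decodeL (length l) (encodeL l) = l.
Proof. induction l. auto. cbn [length encodeL decodeL]. rewrite cancel_of_to. rewrite IHl. auto. Qed.

Lemma of_nat_le i : (fst (of_nat i) <= i /\ snd (of_nat i) <= i)%nat.
Proof.
  pose proof (cancel_to_of i). destruct (of_nat i) as [x y]. simpl.
  pose proof (to_nat_non_decreasing x y). lia.
Qed.

Lemma decodeL_le L : forall r x, In x (decodeL L r) -> (x <= r)%nat.
Proof.
  induction L; intros r x H; simpl in H. contradiction.
  pose proof (of_nat_le r). destruct (of_nat r) as [a r']. simpl in *.
  destruct H as [H|H]. lia. apply IHL in H. lia.
Qed.

Lemma decodeL_length L r : length (decodeL L r) = L.
Proof. revert r; induction L; intros r; simpl; auto. destruct (of_nat r). simpl. auto. Qed.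

Definition ecode (Lf : nat -> nat) (i : nat) : nat * list nat :=
  let (N, r) := of_nat i in (N, decodeL (Lf N) r).

Definition valid (Lf : nat -> nat) (i : nat) : bool :=
  Nat.eqb (to_nat (fst (ecode Lf i), encodeL (snd (ecode Lf i)))) i.

Lemma ecode_surj Lf N l : length l = Lf N -> exists i, valid Lf i = true /\ ecode Lf i = (N, l).
Proof.
  intros Hl. exists (to_nat (N, encodeL l)).
  assert (E : ecode Lf (to_nat (N, encodeL l)) = (N, l)).
  { unfold ecode. rewrite cancel_of_to. rewrite <- Hl. rewrite decode_encode. auto. }
  split; auto. unfold valid. rewrite E. simpl. apply Nat.eqb_refl.
Qed.

Definition Wt (Lf : nat -> nat) (om : nat -> list nat -> R) (i : nat) : R :=
  if valid Lf i then om (fst (ecode Lf i)) (snd (ecode Lf i)) else 0.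

Lemma prod_dec : forall x y : nat * list nat, {x = y} + {x <> y}.
Proof. decide equality. apply list_eq_dec. apply Nat.eq_dec. apply Nat.eq_dec. Qed.

Definition bigbox (Lf : nat -> nat) (M : nat) : list (nat * list nat) :=
  flat_map (fun N => map (fun l => (N, l)) (box (Lf N) M)) (seq 0 (S M)).

Lemma Wt_sum Lf om eps : 0 < eps -> (forall N l, 0 <= om N l) ->
  (forall N M, bsum (Lf N) M (om N) <= eps / 2 ^ (S N)) ->
  forall K, sum_f_R0 (Wt Lf om) K <= eps.
Proof.
  intros Heps Hnn Hb K.
  set (idx := filter (valid Lf) (seq 0 (S K))).
  set (F := fun p : nat * list nat => om (fst p) (snd p)).
  assert (E1 : sum_f_R0 (Wt Lf om) K = lsum F (map (ecode Lf) idx)).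
  { rewrite ssum_f_R0. rewrite <- lsum_seq. rewrite lsum_map. unfold idx.
    induction (seq 0 (S K)) as [|i l IH]; simpl; auto.
    unfold Wt at 1. destruct (valid Lf i); simpl; rewrite <- IH; unfold F; ring. }
  rewrite E1.
  assert (Hnd : NoDup (map (ecode Lf) idx)).
  { apply NoDup_map_NoDup_ForallPairs.
    - intros i j Hi Hj He. unfold idx in Hi, Hj. apply filter_In in Hi. apply filter_In in Hj.
      destruct Hi as [_ Hi]. destruct Hj as [_ Hj]. unfold valid in Hi, Hj.
      apply Nat.eqb_eq in Hi. apply Nat.eqb_eq in Hj. rewrite <- Hi, <- Hj. rewrite He. auto.
    - unfold idx. apply NoDup_filter. apply seq_NoDup. }
  apply Rle_trans with (lsum F (bigbox Lf K)).
  - apply lsum_incl; auto. apply prod_dec.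
    + intros p Hp. apply in_map_iff in Hp. destruct Hp as [i [Hi Hin]].
      unfold idx in Hin. apply filter_In in Hin. destruct Hin as [Hin _]. apply in_seq in Hin.
      unfold ecode in Hi. pose proof (of_nat_le i). destruct (of_nat i) as [N r]. simpl in *. subst p.
      unfold bigbox. apply in_flat_map. exists N. split. apply in_seq. lia.
      apply in_map. apply in_box. apply decodeL_length.
      intros x Hx. apply decodeL_le in Hx. lia.
    + intros [N l]. apply Hnn.
  - unfold bigbox. rewrite lsum_flat_map, lsum_seq.
    apply Rle_trans with (ssum (fun N => eps / 2 ^ S N) (S K)).
    + apply ssum_mono. intros N _. rewrite lsum_map. unfold F; simpl. rewrite lsum_box. apply Hb.
    + assert (forall n, ssum (fun N => eps / 2 ^ S N) n = eps - eps / 2 ^ n).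
      { induction n. simpl. field. cbn [ssum]. rewrite IHn. simpl. field. apply pow_nonzero. lra. }
      rewrite H. assert (0 < eps / 2 ^ S K).
      { apply Rdiv_lt_0_compat. auto. apply pow_lt; lra. }
      lra.
Qed.

Definition rp (x : nat) (e : R) : R := Rpower (INR x) e.

Lemma rp_pos x e : 0 < rp x e.
Proof. unfold rp, Rpower. apply exp_pos. Qed.

Lemma Rpower_1_l e : Rpower 1 e = 1.
Proof. unfold Rpower. rewrite ln_1, Rmult_0_r, exp_0. auto. Qed.

Lemma Rpower_dec x y c : 0 < x <= y -> 0 <= c -> Rpower y (- c) <= Rpower x (- c).
Proof.
  intros Hxy Hc. rewrite !Rpower_Ropp. apply Rinv_le_contravar.
  unfold Rpower; apply exp_pos. apply Rle_Rpower_l; auto.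
Qed.

Lemma Rpower_le1 x c : 1 <= x -> 0 <= c -> Rpower x (- c) <= 1.
Proof.
  intros Hx Hc. rewrite <- (Rpower_1_l (-c)). apply Rpower_dec; lra.
Qed.

Lemma Rpower_m2 x : 0 < x -> Rpower x (-2) = / x ^ 2.
Proof.
  intros Hx. replace (-2) with (- INR 2) by (simpl; ring). rewrite Rpower_Ropp. f_equal.
  apply Rpower_pow; auto.
Qed.

Definition chi (t : R) (x : nat) : R := if (1 <=? x)%nat then rp x (- t) else 0.

Lemma mvt_step t n : 0 < t < 1 -> (1 <= n)%nat ->
  rp (S n) (- t) <= / (1 - t) * (rp (S n) (1 - t) - rp n (1 - t)).
Proof.
  intros Ht Hn. unfold rp.
  assert (HnR : 1 <= INR n) by (apply (le_INR 1); auto).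
  rewrite S_INR.
  destruct (MVT_cor2 (fun x => Rpower x (1 - t)) (fun x => (1 - t) * Rpower x (1 - t - 1))
              (INR n) (INR n + 1) ltac:(lra)) as [c [Hc1 Hc2]].
  { intros c Hc. apply derivable_pt_lim_power. lra. }
  rewrite Hc1. replace (1 - t - 1) with (- t) by ring.
  replace (/ (1 - t) * ((1 - t) * Rpower c (- t) * (INR n + 1 - INR n))) with (Rpower c (-t)) by (field; lra).
  apply Rpower_dec. lra. lra.
Qed.

Lemma chi_sum t n : 0 < t < 1 -> (1 <= n)%nat -> ssum (chi t) (S n) <= / (1 - t) * rp n (1 - t).
Proof.
  intros Ht Hn. induction n as [|n IH]. lia.
  destruct (Nat.eq_dec n 0) as [->|Hn0].
  - simpl. unfold chi. simpl. unfold rp. simpl INR. rewrite !Rpower_1_l.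
    rewrite <- Rinv_1 at 1. assert (/ 1 <= / (1 - t)) by (apply Rinv_le_contravar; lra). lra.
  - cbn [ssum]. cbn [ssum] in IH. specialize (IH ltac:(lia)).
    replace (chi t (S n)) with (rp (S n) (-t)) by (unfold chi; replace (1 <=? S n)%nat with true by (symmetry; apply Nat.leb_le; lia); auto).
    pose proof (mvt_step t n Ht ltac:(lia)).
    lra.
Qed.

Definition phi (t : R) (a x : nat) : R := if ((1 <=? x) && (x <? a))%nat then rp x (- t) else 0.

Lemma ssum_incr g n k : (forall x, 0 <= g x) -> ssum g n <= ssum g (n + k).
Proof. intros Hg. induction k. rewrite Nat.add_0_r. lra.
  rewrite Nat.add_succ_r. cbn [ssum]. specialize (Hg (n + k)%nat). lra. Qed.

Lemma ssum_vanish g a : (forall x, 0 <= g x) -> (forall x, (a <= x)%nat -> g x = 0) ->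
  forall n, ssum g n <= ssum g a.
Proof.
  intros Hg Hv n. induction n.
  - simpl. apply ssum_nonneg; auto.
  - cbn [ssum]. destruct (le_lt_dec a n).
    + rewrite Hv; auto. lra.
    + pose proof (ssum_incr g (S n) (a - S n)%nat Hg). replace (S n + (a - S n))%nat with a in H by lia.
      cbn [ssum] in H. auto.
Qed.

Lemma phi_sum t a M : 0 < t < 1 -> (1 <= a)%nat -> ssum (phi t a) M <= / (1 - t) * rp a (1 - t).
Proof.
  intros Ht Ha.
  apply Rle_trans with (ssum (phi t a) a).
  { apply ssum_vanish. intros x; unfold phi; destruct andb; [left; apply rp_pos|lra].
    intros x Hx. unfold phi. replace (x <? a)%nat with false by (symmetry; apply Nat.ltb_ge; auto).
    rewrite andb_false_r. auto. }
  destruct a as [|a]. lia.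
  apply Rle_trans with (ssum (chi t) (S a)).
  { apply ssum_mono. intros x Hx. unfold phi, chi.
    replace (x <? S a)%nat with true by (symmetry; apply Nat.ltb_lt; auto).
    rewrite andb_true_r. lra. }
  destruct (Nat.eq_dec a 0) as [->|Ha0].
  - simpl. unfold chi; simpl. rewrite Rplus_0_r. apply Rmult_le_pos. left; apply Rinv_0_lt_compat; lra. left; apply rp_pos.
  - apply Rle_trans with (/ (1 - t) * rp a (1 - t)). apply chi_sum; auto; lia.
    apply Rmult_le_compat_l. left; apply Rinv_0_lt_compat; lra.
    unfold rp. apply Rle_Rpower_l. lra. split. apply lt_0_INR; lia. apply le_INR; lia.
Qed.

Definition psi2 (d : nat) : R := if (1 <=? d)%nat then / (INR d) ^ 2 else 0.

Lemma psi2_sum M : ssum psi2 (S M) <= 2.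
Proof.
  assert (H : forall M, (1 <= M)%nat -> ssum psi2 (S M) <= 2 - / INR M).
  { intros M0 HM. induction M0 as [|M0 IH]. lia.
    destruct (Nat.eq_dec M0 0) as [->|HM0].
    - simpl. unfold psi2; simpl. lra.
    - specialize (IH ltac:(lia)). cbn [ssum] in *.
      replace (psi2 (S M0)) with (/ INR (S M0) ^ 2) by (unfold psi2; replace (1 <=? S M0)%nat with true by (symmetry; apply Nat.leb_le; lia); auto).
      assert (HM1 : 1 <= INR M0) by (apply (le_INR 1); lia). rewrite S_INR.
      assert (/ (INR M0 + 1) ^ 2 <= / INR M0 - / (INR M0 + 1)).
      { replace (/ INR M0 - / (INR M0 + 1)) with (/ (INR M0 * (INR M0 + 1))) by (field; lra).
        apply Rinv_le_contravar. nra. nra. }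
      lra. }
  destruct M. simpl. unfold psi2; simpl. lra.
  specialize (H (S M) ltac:(lia)). assert (0 < / INR (S M)). apply Rinv_0_lt_compat, lt_0_INR; lia. lra.
Qed.

Definition stagew (t : R) (m : nat) (l : list nat) : R :=
  match l with
  | a :: d :: xs => (if ((m <=? a) && (1 <=? d))%nat then rp (a + d) (- (t * (INR m - 1))) else 0)
                    * prodL (phi t a) xs
  | _ => 0 end.

Lemma rp_split a d e : (1 <= a)%nat -> (1 <= d)%nat -> 2 <= e ->
  rp (a + d) (- e) <= rp a (- (e - 2)) * psi2 d.
Proof.
  intros Ha Hd He. unfold rp, psi2.
  replace (1 <=? d)%nat with true by (symmetry; apply Nat.leb_le; lia).
  assert (HaR : 1 <= INR a) by (apply (le_INR 1); auto).
  assert (HdR : 1 <= INR d) by (apply (le_INR 1); auto).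
  rewrite plus_INR.
  replace (- e) with (- (e - 2) + -2) by ring. rewrite Rpower_plus.
  apply Rmult_le_compat. left; unfold Rpower; apply exp_pos. left; unfold Rpower; apply exp_pos.
  apply Rpower_dec; lra.
  rewrite Rpower_m2 by lra. apply Rinv_le_contravar. nra. nra.
Qed.

Lemma rp_split2 a m E : (1 <= m)%nat -> (m <= a)%nat -> 0 <= E ->
  rp a (- (E + 2)) <= rp m (- E) * psi2 a.
Proof.
  intros Hm Ha HE. unfold rp, psi2.
  replace (1 <=? a)%nat with true by (symmetry; apply Nat.leb_le; lia).
  assert (HmR : 1 <= INR m) by (apply (le_INR 1); auto).
  assert (HaR : INR m <= INR a) by (apply le_INR; auto).
  replace (- (E + 2)) with (- E + -2) by ring. rewrite Rpower_plus.
  apply Rmult_le_compat. left; unfold Rpower; apply exp_pos. left; unfold Rpower; apply exp_pos.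
  apply Rpower_dec; lra.
  rewrite Rpower_m2 by lra. lra.
Qed.

Lemma rp_pow a r g : (1 <= a)%nat -> (rp a r) ^ g = rp a (r * INR g).
Proof.
  intros Ha. unfold rp. rewrite <- Rpower_mult. rewrite Rpower_pow. auto.
  unfold Rpower; apply exp_pos.
Qed.

Lemma psi2_nonneg d : 0 <= psi2 d.
Proof. unfold psi2. destruct (1 <=? d)%nat. 2: lra.
  destruct d. simpl. rewrite Rmult_0_l, Rinv_0. lra. left. apply Rinv_0_lt_compat. apply pow_lt. apply lt_0_INR; lia. Qed.

Lemma phi_nonneg t a x : 0 <= phi t a x.
Proof. unfold phi. destruct andb. left; apply rp_pos. lra. Qed.

Lemma stage_bound t m g M : 0 < t < 1 -> (1 <= m)%nat ->
  0 <= t * (INR m - 1) - 4 - (1 - t) * INR g ->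
  bsum (2 + g) M (stagew t m) <=
    4 * (/ (1 - t)) ^ g * rp m (- (t * (INR m - 1) - 4 - (1 - t) * INR g)).
Proof.
  intros Ht Hm HE.
  set (E := t * (INR m - 1) - 4 - (1 - t) * INR g) in *.
  set (C := / (1 - t)).
  assert (HC : 1 <= C). { unfold C. rewrite <- Rinv_1. apply Rinv_le_contravar; lra. }
  set (e := t * (INR m - 1)) in *.
  assert (He : 2 <= e). { assert (0 <= (1 - t) * INR g) by (apply Rmult_le_pos; [lra| apply pos_INR]). unfold E in HE. lra. }
  cbn [bsum Nat.add].
  apply Rle_trans with (ssum (fun a => 2 * C ^ g * rp m (- E) * psi2 a) (S M)).
  2: { rewrite ssum_scal. pose proof (psi2_sum M).
       assert (0 <= 2 * C ^ g * rp m (- E)).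
       { apply Rmult_le_pos. apply Rmult_le_pos. lra. apply pow_le; lra. left; apply rp_pos. }
       nra. }
  apply ssum_mono. intros a _.
  assert (Hin : forall d, bsum g M (fun l => stagew t m (a :: d :: l)) =
     (if ((m <=? a) && (1 <=? d))%nat then rp (a + d) (- e) else 0) * (ssum (phi t a) (S M)) ^ g).
  { intros d. unfold stagew. rewrite bsum_scal. rewrite bsum_prodL. auto. }
  rewrite (ssum_ext _ _ _ (fun d _ => Hin d)).
  destruct (m <=? a)%nat eqn:Hma.
  2: { simpl andb. rewrite (ssum_ext _ (fun _ => 0)). 
       - assert (ssum (fun _ : nat => 0) (S M) = 0). { clear. induction (S M). auto. cbn [ssum]. rewrite IHn; ring. }
         rewrite H. apply Rmult_le_pos. apply Rmult_le_pos. apply Rmult_le_pos. lra. apply pow_le; lra.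
         left; apply rp_pos. apply psi2_nonneg.
       - intros; ring. }
  apply Nat.leb_le in Hma. simpl andb.
  assert (Ha1 : (1 <= a)%nat) by lia.
  assert (Hph : 0 <= ssum (phi t a) (S M)) by (apply ssum_nonneg; intros; apply phi_nonneg).
  assert (Hpg : (ssum (phi t a) (S M)) ^ g <= (C * rp a (1 - t)) ^ g).
  { apply pow_incr. split; auto. apply phi_sum; auto. }
  apply Rle_trans with (ssum (fun d => rp a (- (e - 2)) * psi2 d * (C * rp a (1 - t)) ^ g) (S M)).
  { apply ssum_mono. intros d _. destruct d as [|d'].
    2: { set (d := S d'). assert (Hd : (1 <= d)%nat) by (unfold d; lia). simpl andb. apply Rmult_le_compat. left; apply rp_pos. apply pow_le; auto.
      apply rp_split; auto. auto. }
    simpl andb. rewrite Rmult_0_l. apply Rmult_le_pos. apply Rmult_le_pos. left; apply rp_pos. apply psi2_nonneg.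
      apply pow_le. apply Rmult_le_pos. lra. left; apply rp_pos. }
  rewrite (ssum_ext _ (fun d => (rp a (- (e - 2)) * (C * rp a (1 - t)) ^ g) * psi2 d)) by (intros; ring).
  rewrite ssum_scal. pose proof (psi2_sum M).
  rewrite Rpow_mult_distr. rewrite rp_pow by auto.
  replace (rp a (- (e - 2)) * (C ^ g * rp a ((1 - t) * INR g))) with (C ^ g * rp a (- (E + 2))).
  2: { unfold rp. replace (-(E+2)) with (-(e-2) + (1-t)*INR g) by (unfold E; ring). rewrite Rpower_plus. ring. }
  pose proof (rp_split2 a m E Hm Hma HE).
  assert (0 <= C ^ g) by (apply pow_le; lra).
  assert (0 <= C ^ g * rp a (- (E + 2))) by (apply Rmult_le_pos; auto; left; apply rp_pos).
  apply Rle_trans with (C ^ g * rp a (- (E + 2)) * 2). apply Rmult_le_compat_l; auto.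
  assert (C ^ g * rp a (- (E + 2)) <= C ^ g * (rp m (- E) * psi2 a)) by (apply Rmult_le_compat_l; auto).
  nra.
Qed.

Lemma ln_le' x y : 0 < x <= y -> ln x <= ln y.
Proof. intros [H1 [H2|H2]]. left; apply ln_increasing; auto. subst; lra. Qed.

Lemma exp_le' x y : x <= y -> exp x <= exp y.
Proof. intros [H|H]. left; apply exp_increasing; auto. subst; lra. Qed.

Lemma ln_ge0 x : 1 <= x -> 0 <= ln x.
Proof. intros H. rewrite <- ln_1. apply ln_le'. lra. Qed.

Lemma Q_small t gam A0 X : 0 < t < 1 -> 0 <= gam -> 0 <= A0 ->
  0 < t - (1 - t) * gam ->
  exists Th, forall m g, Th <= INR m -> INR g <= gam * (INR m - 1) + A0 ->
    0 <= t * (INR m - 1) - 4 - (1 - t) * INR g /\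
    4 * (/ (1 - t)) ^ g * rp m (- (t * (INR m - 1) - 4 - (1 - t) * INR g)) <= exp (- X).
Proof.
  intros Ht Hg HA Hk.
  set (kap := t - (1 - t) * gam) in *.
  set (C := / (1 - t)).
  assert (HC : 1 <= C). { unfold C. rewrite <- Rinv_1. apply Rinv_le_contravar; lra. }
  set (lC := ln C). assert (HlC : 0 <= lC) by (apply ln_ge0; auto).
  set (K1 := ln 4 + A0 * lC).
  set (K2 := 4 + (1 - t) * A0).
  set (T := Rmax (2 * gam * lC / kap) (Rmax (4 * (K1 + X) / kap) 0)).
  exists (Rmax 2 (Rmax (1 + 4 * K2 / kap) (exp T))).
  intros m g Hm Hgm.
  assert (Hm2 : 2 <= INR m) by (eapply Rle_trans; [apply Rmax_l|apply Hm]).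
  assert (Hu : 4 * K2 / kap <= INR m - 1).
  { assert (1 + 4 * K2 / kap <= INR m). eapply Rle_trans; [|apply Hm].
    eapply Rle_trans; [|apply Rmax_r]. apply Rmax_l. lra. }
  assert (HL : T <= ln (INR m)).
  { assert (exp T <= INR m). eapply Rle_trans; [|apply Hm].
    eapply Rle_trans; [|apply Rmax_r]. apply Rmax_r.
    rewrite <- (ln_exp T). apply ln_le'. split; auto. apply exp_pos. }
  set (L := ln (INR m)) in *.
  set (u := INR m - 1) in *.
  assert (HT1 : 2 * gam * lC / kap <= L) by (eapply Rle_trans; [apply Rmax_l|apply HL]).
  assert (HT2 : 4 * (K1 + X) / kap <= L).
  { eapply Rle_trans; [|apply HL]. eapply Rle_trans; [|apply Rmax_r]. apply Rmax_l. }
  assert (HT3 : 0 <= L).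
  { eapply Rle_trans; [|apply HL]. eapply Rle_trans; [|apply Rmax_r]. apply Rmax_r. }
  assert (HK2 : 4 <= K2) by (unfold K2; nra).
  assert (Hu' : 4 * K2 <= kap * u).
  { apply Rmult_le_compat_l with (r := kap) in Hu; [|lra].
    unfold Rdiv in Hu. replace (kap * (4 * K2 * / kap)) with (4 * K2) in Hu by (field; lra). lra. }
  assert (HE : kap * u - K2 <= t * u - 4 - (1 - t) * INR g).
  { unfold kap, K2. nra. }
  split. { nra. }
  set (E := t * u - 4 - (1 - t) * INR g) in *.
  replace 4 with (exp (ln 4)) at 1 by (apply exp_ln; lra).
  rewrite <- (Rpower_pow g C) by lra. unfold rp, Rpower. fold L. fold lC.
  rewrite <- !exp_plus. apply exp_le'.
  assert (H1 : INR g * lC <= (gam * u + A0) * lC) by (apply Rmult_le_compat_r; auto).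
  assert (H2 : - E * L <= - (kap * u - K2) * L) by (apply Rmult_le_compat_r; lra).
  assert (H3 : gam * lC <= kap * L / 2).
  { apply Rmult_le_compat_l with (r := kap) in HT1; [|lra].
    unfold Rdiv in HT1. replace (kap * (2 * gam * lC * / kap)) with (2 * gam * lC) in HT1 by (field; lra). lra. }
  assert (H4 : K1 + X <= kap * L / 4).
  { apply Rmult_le_compat_l with (r := kap) in HT2; [|lra].
    unfold Rdiv in HT2. replace (kap * (4 * (K1 + X) * / kap)) with (4 * (K1 + X)) in HT2 by (field; lra). lra. }
  assert (Hu1 : 1 <= u) by (unfold u; lra).
  assert (H5 : gam * u * lC <= kap * u * L / 2).
  { apply Rmult_le_compat_r with (r := u) in H3; lra. }
  assert (H6 : K2 * L <= kap * u * L / 4).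
  { apply Rmult_le_compat_r with (r := L) in Hu'; lra. }
  assert (HkL : 0 <= kap * L) by (apply Rmult_le_pos; lra).
  assert (H7 : kap * L / 4 <= kap * u * L / 4).
  { apply Rmult_le_compat_r with (r := kap * L) in Hu1; lra. }
  unfold K1 in H4. nra.
Qed.

Lemma J_good x : J_set x -> good x.
Proof. intros [H1 [H2 _]]. split; auto. Qed.

Lemma J_a1 x : J_set x -> (1 <= cf_a 1 x)%nat.
Proof.
  intros [Hx _]. rewrite cf_a_1. destruct (gauss_spec x Hx) as [H _]. lia.
Qed.

Lemma J_lt x i j : J_set x -> (1 <= i)%nat -> (i < j)%nat -> (cf_a i x < cf_a j x)%nat.
Proof.
  intros HJ Hi Hij. induction Hij.
  - destruct HJ as [_ [_ H]]. apply H; auto.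
  - destruct HJ as [_ [_ H]]. specialize (H m ltac:(lia)). lia.
Qed.

Lemma J_ge x j : J_set x -> (1 <= j)%nat -> (j <= cf_a j x)%nat.
Proof.
  intros HJ Hj. induction Hj.
  - apply J_a1; auto.
  - pose proof (J_lt x m (S m) HJ Hj ltac:(lia)). lia.
Qed.

Lemma J_le x i j : J_set x -> (1 <= i)%nat -> (i <= j)%nat -> (cf_a i x <= cf_a j x)%nat.
Proof. intros HJ Hi Hij. destruct (Nat.eq_dec i j). subst; lia. pose proof (J_lt x i j HJ Hi ltac:(lia)). lia. Qed.

Fixpoint digs (x : R) (k L : nat) : list nat :=
  match L with O => [] | S L' => cf_a k x :: digs x (S k) L' end.

Lemma digs_length x k L : length (digs x k L) = L.
Proof. revert k; induction L; intros k; simpl; auto. Qed.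

Definition agree (x y : R) (k L : nat) : Prop :=
  forall j, (k <= j < k + L)%nat -> cf_a j x = cf_a j y.

Lemma digs_agree x y k L : digs x k L = digs y k L -> agree x y k L.
Proof.
  revert k; induction L; intros k H j Hj. lia.
  simpl in H. injection H as H1 H2.
  destruct (Nat.eq_dec j k). subst; auto. apply (IHL (S k)); auto. lia.
Qed.

Lemma prodL_app phi l1 l2 : prodL phi (l1 ++ l2) = prodL phi l1 * prodL phi l2.
Proof. induction l1; simpl. ring. rewrite IHl1. ring. Qed.

Definition F (t : R) (x : R) (j : nat) : R := rp (cf_a j x) (- t).

Lemma prodL_digs t x a k L :
  (forall j, (k <= j < k + L)%nat -> (1 <= cf_a j x < a)%nat) ->
  prodL (phi t a) (digs x k L) = prodR (F t x) k L.
Proof.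
  revert k; induction L; intros k H; simpl; auto.
  rewrite IHL by (intros; apply H; lia). f_equal.
  unfold phi, F. specialize (H k ltac:(lia)).
  replace ((1 <=? cf_a k x) && (cf_a k x <? a))%nat with true; auto.
  symmetry. apply andb_true_intro. split. apply Nat.leb_le; lia. apply Nat.ltb_lt; lia.
Qed.

Lemma prodR_app f k L1 L2 : prodR f k (L1 + L2) = prodR f k L1 * prodR f (k + L1) L2.
Proof.
  revert k; induction L1; intros k; simpl. rewrite Nat.add_0_r. ring.
  rewrite IHL1. replace (k + S L1)%nat with (S k + L1)%nat by lia. ring.
Qed.

Lemma prodR_bounds f k L : (forall j, 0 <= f j <= 1) -> 0 <= prodR f k L <= 1.
Proof.
  intros H. revert k; induction L; intros k; simpl. lra.
  specialize (IHL (S k)). specialize (H k). nra.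
Qed.

Lemma prodR_le_factor f k L j : (forall j, 0 <= f j <= 1) -> (k <= j < k + L)%nat -> prodR f k L <= f j.
Proof.
  intros H. revert k; induction L; intros k Hj. lia. simpl.
  destruct (Nat.eq_dec j k).
  - subst. pose proof (prodR_bounds f (S k) L H). specialize (H k). nra.
  - specialize (IHL (S k) ltac:(lia)). pose proof (H k). pose proof (H j). nra.
Qed.

Lemma F_bounds t x j : 0 < t -> J_set x -> (1 <= j)%nat -> 0 <= F t x j <= 1.
Proof.
  intros Ht HJ Hj. unfold F. split. left; apply rp_pos.
  apply Rpower_le1. apply (le_INR 1). pose proof (J_ge x j HJ Hj). lia. lra.
Qed.

Lemma prodR_F_bounds t x k L : 0 < t -> J_set x -> (1 <= k)%nat -> 0 <= prodR (F t x) k L <= 1.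
Proof.
  intros Ht HJ. revert k; induction L; intros k Hk; simpl. lra.
  specialize (IHL (S k) ltac:(lia)). pose proof (F_bounds t x k Ht HJ Hk). nra.
Qed.

Lemma block_bound t x k m : 0 < t -> J_set x -> (1 <= k)%nat -> (1 <= m)%nat ->
  prodR (F t x) k m <= rp (cf_a (S k) x) (- (t * (INR m - 1))).
Proof.
  intros Ht HJ Hk Hm. destruct m as [|m]. lia. simpl prodR.
  assert (H : prodR (F t x) (S k) m <= (rp (cf_a (S k) x) (- t)) ^ m).
  { clear Hm. assert (forall j, (S k <= j)%nat -> prodR (F t x) j m <= (rp (cf_a (S k) x) (- t)) ^ m).
    { induction m; intros j Hj; simpl. lra.
      apply Rmult_le_compat. left; apply rp_pos. apply prodR_F_bounds; auto. lia.
      { unfold F, rp. apply Rpower_dec; [|lra]. split. apply lt_0_INR. pose proof (J_ge x (S k) HJ ltac:(lia)). lia.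
        apply le_INR. apply J_le; auto; lia. }
      apply IHm. lia. }
    apply H. lia. }
  rewrite rp_pow in H. 2: { pose proof (J_ge x (S k) HJ ltac:(lia)). lia. }
  rewrite S_INR. replace (- (t * (INR m + 1 - 1))) with (- t * INR m) by ring.
  pose proof (F_bounds t x k Ht HJ Hk). pose proof (prodR_F_bounds t x (S k) m Ht HJ ltac:(lia)).
  nra.
Qed.

Definition gap (sigma : nat -> nat) (m : nat) : nat := (sigma m - sigma (pred m) - pred m)%nat.
Definition Pf (sigma : nat -> nat) (N : nat) : nat := (sigma N + N - 1)%nat.

Fixpoint mids (sigma : nat -> nat) (N k : nat) : list (nat * nat) :=
  match k with O => [] | S k' => (N + S k', gap sigma (N + S k')) :: mids sigma N k' end%nat.

Definition stg (sigma : nat -> nat) (N k : nat) : list (nat * nat) :=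
  ((N + S k)%nat, (gap sigma (N + S k) + Pf sigma N)%nat) :: mids sigma N k.

Fixpoint Lst (ms : list (nat * nat)) : nat :=
  match ms with [] => O | (m, g) :: ms' => (2 + g + Lst ms')%nat end.

Fixpoint wt (t : R) (ms : list (nat * nat)) (l : list nat) : R :=
  match ms with
  | [] => 1
  | (m, g) :: ms' => stagew t m (firstn (2 + g) l) * wt t ms' (skipn (2 + g) l)
  end.

Lemma stagew_nonneg t m l : 0 <= stagew t m l.
Proof.
  unfold stagew. destruct l as [|a [|d xs]]; try lra.
  apply Rmult_le_pos. destruct andb. left; apply rp_pos. lra.
  induction xs; simpl. lra. apply Rmult_le_pos; auto. apply phi_nonneg.
Qed.

Lemma wt_nonneg t ms l : 0 <= wt t ms l.
Proof.
  revert l; induction ms as [|[m g] ms IH]; intros l; simpl. lra.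
  apply Rmult_le_pos. apply stagew_nonneg. apply IH.
Qed.

Lemma wt_cons t m g ms sp rest : length sp = (2 + g)%nat ->
  wt t ((m, g) :: ms) (sp ++ rest) = stagew t m sp * wt t ms rest.
Proof.
  intros H. unfold wt; fold wt. rewrite firstn_app, skipn_app.
  rewrite firstn_all2, skipn_all2 by lia. replace (2 + g - length sp)%nat with 0%nat by lia.
  rewrite firstn_O, skipn_O, app_nil_r. simpl. auto.
Qed.

Lemma bsum_wt t m g ms M :
  bsum (Lst ((m, g) :: ms)) M (wt t ((m, g) :: ms)) =
  bsum (2 + g) M (stagew t m) * bsum (Lst ms) M (wt t ms).
Proof.
  change (Lst ((m, g) :: ms)) with ((2 + g) + Lst ms)%nat.
  rewrite bsum_app.
  rewrite (bsum_ext (2 + g) M _ (fun l1 => stagew t m l1 * bsum (Lst ms) M (wt t ms))).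
  - rewrite Rmult_comm. rewrite <- bsum_scal. apply bsum_ext. intros; ring.
  - intros l1 Hl1. rewrite <- bsum_scal. apply bsum_ext. intros l2 _. apply wt_cons. auto.
Qed.

Lemma mids_bound t sigma N k M :
  (forall m g, In (m, g) (mids sigma N k) -> bsum (2 + g) M (stagew t m) <= 1) ->
  bsum (Lst (mids sigma N k)) M (wt t (mids sigma N k)) <= 1.
Proof.
  induction k; intros H. simpl. lra.
  cbn [mids]. rewrite bsum_wt.
  assert (H1 : bsum (2 + gap sigma (N + S k)) M (stagew t (N + S k)) <= 1) by (apply H; left; auto).
  assert (H2 : bsum (Lst (mids sigma N k)) M (wt t (mids sigma N k)) <= 1) by (apply IHk; intros; apply H; right; auto).
  assert (0 <= bsum (2 + gap sigma (N + S k)) M (stagew t (N + S k))) by (apply bsum_nonneg; intros; apply stagew_nonneg).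
  assert (0 <= bsum (Lst (mids sigma N k)) M (wt t (mids sigma N k))) by (apply bsum_nonneg; intros; apply wt_nonneg).
  nra.
Qed.

Definition sparams (sigma : nat -> nat) (x : R) (m : nat) (e : list nat) : list nat :=
  cf_a (sigma m) x :: (cf_a (S (sigma m)) x - cf_a (sigma m) x)%nat ::
  (e ++ digs x (sigma (pred m) + pred m) (gap sigma m)).

Fixpoint mparams (sigma : nat -> nat) (x : R) (N k : nat) : list nat :=
  match k with O => [] | S k' => sparams sigma x (N + S k') [] ++ mparams sigma x N k' end%nat.

Definition params (sigma : nat -> nat) (x : R) (N k : nat) : list nat :=
  sparams sigma x (N + S k) (digs x 1 (Pf sigma N)) ++ mparams sigma x N k.

Lemma sparams_length sigma x m e : length (sparams sigma x m e) = (2 + (length e + gap sigma m))%nat.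
Proof. unfold sparams. simpl. rewrite length_app, digs_length. auto. Qed.

Lemma mparams_length sigma x N k : length (mparams sigma x N k) = Lst (mids sigma N k).
Proof.
  induction k. auto. cbn [mparams mids Lst]. rewrite length_app, sparams_length, IHk. simpl. lia.
Qed.

Lemma params_length sigma x N k : length (params sigma x N k) = Lst (stg sigma N k).
Proof.
  unfold params, stg. rewrite length_app, sparams_length, mparams_length, digs_length.
  simpl. lia.
Qed.

Definition Dn (sigma : nat -> nat) (n : nat) : nat := (sigma n + n - 1)%nat.

Definition sig_hyp (sigma : nat -> nat) : Prop :=
  (forall n, (1 <= n)%nat -> (0 < sigma n)%nat) /\
  (forall n, (1 <= n)%nat -> (sigma n + n <= sigma (S n))%nat).

Lemma sig_ge sigma : sig_hyp sigma -> forall m, (1 <= m)%nat -> (m <= sigma m)%nat.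
Proof.
  intros [H1 H3] m Hm. induction Hm. specialize (H1 1%nat ltac:(lia)). lia.
  specialize (H3 m Hm). lia.
Qed.

Lemma sig_mono sigma : sig_hyp sigma -> forall m k, (1 <= m)%nat -> (sigma m + m <= sigma (m + S k))%nat.
Proof.
  intros [H1 H3] m k Hm. induction k. rewrite Nat.add_1_r. apply H3; auto.
  specialize (H3 (m + S k)%nat ltac:(lia)). replace (m + S (S k))%nat with (S (m + S k)) by lia. lia.
Qed.

Lemma stage_le t sigma x m e : 0 < t -> J_set x -> sig_hyp sigma -> (2 <= m)%nat ->
  prodL (phi t (cf_a (sigma m) x)) e * prodR (F t x) (sigma (pred m) + pred m) (gap sigma m)
   * prodR (F t x) (sigma m) m <= stagew t m (sparams sigma x m e).
Proof.
  intros Ht HJ Hsig Hm.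
  assert (Hsm : (m <= sigma m)%nat) by (apply sig_ge; auto; lia).
  assert (Hsm1 : (sigma (pred m) + pred m <= sigma m)%nat).
  { destruct Hsig as [_ H3]. specialize (H3 (pred m) ltac:(lia)). replace (S (pred m)) with m in H3 by lia. auto. }
  set (a := cf_a (sigma m) x). set (a' := cf_a (S (sigma m)) x).
  assert (Haa : (a < a')%nat) by (apply J_lt; auto; lia).
  assert (Hma : (m <= a)%nat). { pose proof (J_ge x (sigma m) HJ ltac:(lia)). unfold a. lia. }
  unfold sparams, stagew. fold a a'.
  replace ((m <=? a) && (1 <=? a' - a))%nat with true.
  2: { symmetry. apply andb_true_intro. split; apply Nat.leb_le; lia. }
  replace (a + (a' - a))%nat with a' by lia.
  rewrite prodL_app.
  rewrite (prodL_digs t x a).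
  2: { intros j Hj. split. pose proof (J_ge x j HJ ltac:(lia)). lia.
       apply J_lt; auto. lia. unfold gap in Hj. lia. }
  pose proof (block_bound t x (sigma m) m Ht HJ ltac:(lia) ltac:(lia)). fold a' in H.
  assert (0 <= prodL (phi t a) e).
  { clear. induction e; simpl. lra. apply Rmult_le_pos; auto. apply phi_nonneg. }
  assert (0 <= prodR (F t x) (sigma (pred m) + pred m) (gap sigma m)).
  { apply prodR_F_bounds; auto. lia. }
  assert (0 <= prodR (F t x) (sigma m) m) by (apply prodR_F_bounds; auto; lia).
  apply Rle_trans with ((prodL (phi t a) e * prodR (F t x) (sigma (pred m) + pred m) (gap sigma m)) * rp a' (-(t*(INR m-1)))).
  apply Rmult_le_compat_l; [apply Rmult_le_pos; auto| auto]. right; ring.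
Qed.

Lemma Dn_step sigma N k : sig_hyp sigma -> (1 <= N)%nat ->
  Dn sigma (N + S k) = (Dn sigma (N + k) + gap sigma (N + S k) + (N + S k))%nat /\
  S (Dn sigma (N + k)) = (sigma (pred (N + S k)) + pred (N + S k))%nat /\
  (sigma (pred (N + S k)) + pred (N + S k) + gap sigma (N + S k) = sigma (N + S k))%nat.
Proof.
  intros [H1 H3] HN. unfold Dn, gap.
  replace (pred (N + S k)) with (N + k)%nat by lia.
  specialize (H3 (N + k)%nat ltac:(lia)). specialize (H1 (N + k)%nat ltac:(lia)).
  replace (S (N + k)) with (N + S k)%nat in H3 by lia. lia.
Qed.

Lemma Dn_ge sigma N k : sig_hyp sigma -> (1 <= N)%nat -> (Pf sigma N <= Dn sigma (N + k))%nat.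
Proof.
  intros Hs HN. induction k. unfold Pf, Dn. rewrite Nat.add_0_r. lia.
  destruct (Dn_step sigma N k Hs HN) as [H _]. lia.
Qed.

Lemma mp_le t sigma x N : 0 < t -> J_set x -> sig_hyp sigma -> (1 <= N)%nat -> forall k,
  prodR (F t x) (S (Pf sigma N)) (Dn sigma (N + k) - Pf sigma N) <= wt t (mids sigma N k) (mparams sigma x N k).
Proof.
  intros Ht HJ Hs HN k. induction k.
  - rewrite Nat.add_0_r. unfold Dn, Pf. rewrite Nat.sub_diag. simpl. lra.
  - destruct (Dn_step sigma N k Hs HN) as [E1 [E2 E3]].
    pose proof (Dn_ge sigma N k Hs HN).
    replace (Dn sigma (N + S k) - Pf sigma N)%nat with
      ((Dn sigma (N + k) - Pf sigma N) + gap sigma (N + S k) + (N + S k))%nat by lia.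
    rewrite (prodR_app (F t x) _ (Dn sigma (N + k) - Pf sigma N + gap sigma (N + S k)) (N + S k)).
    rewrite (prodR_app (F t x) _ (Dn sigma (N + k) - Pf sigma N) (gap sigma (N + S k))).
    replace (S (Pf sigma N) + (Dn sigma (N + k) - Pf sigma N + gap sigma (N + S k)))%nat with
      (sigma (N + S k))%nat by lia.
    replace (S (Pf sigma N) + (Dn sigma (N + k) - Pf sigma N))%nat with
      (sigma (pred (N + S k)) + pred (N + S k))%nat by lia.
    cbn [mids mparams]. rewrite wt_cons.
    2: { rewrite sparams_length. simpl. lia. }
    pose proof (stage_le t sigma x (N + S k) [] Ht HJ Hs ltac:(lia)). simpl prodL in H0.
    rewrite Rmult_1_l in H0.
    assert (0 <= prodR (F t x) (S (Pf sigma N)) (Dn sigma (N + k) - Pf sigma N)) by (apply prodR_F_bounds; auto; lia).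
    assert (0 <= prodR (F t x) (sigma (pred (N + S k)) + pred (N + S k)) (gap sigma (N + S k))) by (apply prodR_F_bounds; auto; lia).
    assert (0 <= prodR (F t x) (sigma (N + S k)%nat) (N + S k)%nat).
    { apply prodR_F_bounds; auto. pose proof (sig_ge sigma Hs (N + S k)%nat ltac:(lia)). lia. }
    assert (0 <= wt t (mids sigma N k) (mparams sigma x N k)) by apply wt_nonneg.
    rewrite Rmult_assoc. rewrite (Rmult_comm (stagew _ _ _)).
    apply Rmult_le_compat; auto. apply Rmult_le_pos; auto.
Qed.

Lemma full_le t sigma x N k : 0 < t -> J_set x -> sig_hyp sigma -> (1 <= N)%nat ->
  prodR (F t x) 1 (Dn sigma (N + S k)) <= wt t (stg sigma N k) (params sigma x N k).
Proof.
  intros Ht HJ Hs HN.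
  destruct (Dn_step sigma N k Hs HN) as [E1 [E2 E3]].
  pose proof (Dn_ge sigma N k Hs HN).
  set (n := (N + S k)%nat) in *.
  replace (Dn sigma n) with (Pf sigma N + (Dn sigma (N + k) - Pf sigma N) + gap sigma n + n)%nat by lia.
  rewrite (prodR_app (F t x) _ (Pf sigma N + (Dn sigma (N + k) - Pf sigma N) + gap sigma n) n).
  rewrite (prodR_app (F t x) _ (Pf sigma N + (Dn sigma (N + k) - Pf sigma N)) (gap sigma n)).
  rewrite (prodR_app (F t x) _ (Pf sigma N) (Dn sigma (N + k) - Pf sigma N)).
  replace (1 + (Pf sigma N + (Dn sigma (N + k) - Pf sigma N) + gap sigma n))%nat with (sigma n) by lia.
  replace (1 + (Pf sigma N + (Dn sigma (N + k) - Pf sigma N)))%nat with (sigma (pred n) + pred n)%nat by lia.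
  unfold params, stg. fold n. rewrite wt_cons.
  2: { rewrite sparams_length, digs_length. lia. }
  assert (Hearly : prodL (phi t (cf_a (sigma n) x)) (digs x 1 (Pf sigma N)) = prodR (F t x) 1 (Pf sigma N)).
  { apply prodL_digs. intros j Hj. split. pose proof (J_ge x j HJ ltac:(lia)). lia.
    apply J_lt; auto. lia.
    pose proof (sig_mono sigma Hs N k HN). fold n in H0. unfold Pf in Hj. lia. }
  pose proof (stage_le t sigma x n (digs x 1 (Pf sigma N)) Ht HJ Hs ltac:(unfold n; lia)).
  rewrite Hearly in H0.
  pose proof (mp_le t sigma x N Ht HJ Hs HN k).
  replace (1 + Pf sigma N)%nat with (S (Pf sigma N)) by lia.
  assert (0 <= prodR (F t x) 1 (Pf sigma N)) by (apply prodR_F_bounds; auto).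
  assert (0 <= prodR (F t x) (S (Pf sigma N)) (Dn sigma (N + k) - Pf sigma N)) by (apply prodR_F_bounds; auto; lia).
  assert (0 <= prodR (F t x) (sigma (pred n) + pred n) (gap sigma n)) by (apply prodR_F_bounds; auto; unfold n; lia).
  assert (0 <= prodR (F t x) (sigma n) n).
  { apply prodR_F_bounds; auto. pose proof (sig_ge sigma Hs n ltac:(unfold n; lia)). lia. }
  assert (0 <= stagew t n (sparams sigma x n (digs x 1 (Pf sigma N)))) by apply stagew_nonneg.
  replace (prodR (F t x) 1 (Pf sigma N) * prodR (F t x) (S (Pf sigma N)) (Dn sigma (N + k) - Pf sigma N) *
     prodR (F t x) (sigma (pred n) + pred n) (gap sigma n) * prodR (F t x) (sigma n) n) with
    ((prodR (F t x) 1 (Pf sigma N) * prodR (F t x) (sigma (pred n) + pred n) (gap sigma n) * prodR (F t x) (sigma n) n)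
      * prodR (F t x) (S (Pf sigma N)) (Dn sigma (N + k) - Pf sigma N)) by ring.
  apply Rmult_le_compat; auto. apply Rmult_le_pos; auto. apply Rmult_le_pos; auto.
Qed.

Definition GN (sigma : nat -> nat) (M : nat) (x : R) : Prop :=
  J_set x /\ forall m, (1 <= m)%nat -> (M <= m)%nat -> is_AP_block x (sigma m) m.

Lemma agree_app x y k L1 L2 : agree x y k L1 -> agree x y (k + L1) L2 -> agree x y k (L1 + L2).
Proof.
  intros H1 H2 j Hj. destruct (le_lt_dec (k + L1) j). apply H2; lia. apply H1; lia.
Qed.

Lemma app_split {A} (l1 l2 l1' l2' : list A) : l1 ++ l2 = l1' ++ l2' -> length l1 = length l1' ->
  l1 = l1' /\ l2 = l2'.
Proof.
  revert l1'. induction l1 as [|a l1 IH]; intros [|b l1'] H Hl; simpl in *; try discriminate; auto.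
  injection H as H1 H2. subst b. destruct (IH l1' H2 ltac:(lia)) as [-> ->]. auto.
Qed.

Lemma ap_agree x y sig m : is_AP_block x sig m -> is_AP_block y sig m -> (2 <= m)%nat ->
  cf_a sig x = cf_a sig y -> cf_a (S sig) x = cf_a (S sig) y -> agree x y sig m.
Proof.
  intros [dx Hx] [dy Hy] Hm H0 H1 j Hj.
  pose proof (Hx 1%nat ltac:(lia)) as Hx1. pose proof (Hy 1%nat ltac:(lia)) as Hy1.
  rewrite Nat.add_1_r in Hx1, Hy1.
  rewrite H1, H0 in Hx1.
  assert (dx = dy) by lia. subst dy.
  pose proof (Hx (j - sig)%nat ltac:(lia)) as Hxj. pose proof (Hy (j - sig)%nat ltac:(lia)) as Hyj.
  replace (sig + (j - sig))%nat with j in Hxj, Hyj by lia.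
  rewrite H0 in Hxj. apply Nat2Z.inj. lia.
Qed.

Lemma sparams_agree sigma x y m e e' : J_set x -> J_set y -> sig_hyp sigma -> (2 <= m)%nat ->
  is_AP_block x (sigma m) m -> is_AP_block y (sigma m) m ->
  length e = length e' ->
  sparams sigma x m e = sparams sigma y m e' ->
  e = e' /\ agree x y (sigma (pred m) + pred m) (gap sigma m) /\ agree x y (sigma m) m.
Proof.
  intros HJx HJy Hs Hm Hax Hay Hl H.
  unfold sparams in H. injection H as H0 H1 H2.
  assert (Hsm : (1 <= sigma m)%nat) by (pose proof (sig_ge sigma Hs m ltac:(lia)); lia).
  pose proof (J_lt x (sigma m) (S (sigma m)) HJx Hsm ltac:(lia)).
  pose proof (J_lt y (sigma m) (S (sigma m)) HJy Hsm ltac:(lia)).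
  assert (H1' : cf_a (S (sigma m)) x = cf_a (S (sigma m)) y) by lia.
  apply app_split in H2; auto. destruct H2 as [He Hd].
  split; auto. split. apply digs_agree; auto. apply ap_agree; auto.
Qed.

Lemma mp_agree sigma x y N : sig_hyp sigma -> (1 <= N)%nat -> GN sigma N x -> GN sigma N y -> forall k,
  mparams sigma x N k = mparams sigma y N k ->
  agree x y (S (Pf sigma N)) (Dn sigma (N + k) - Pf sigma N).
Proof.
  intros Hs HN [HJx Hx] [HJy Hy] k. induction k; intros H.
  - intros j Hj. rewrite Nat.add_0_r in Hj. unfold Dn, Pf in Hj. lia.
  - cbn [mparams] in H. apply app_split in H.
    2: { rewrite !sparams_length. auto. }
    destruct H as [H1 H2].
    destruct (sparams_agree sigma x y (N + S k) [] [] HJx HJy Hs ltac:(lia)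
      (Hx (N + S k)%nat ltac:(lia) ltac:(lia)) (Hy (N + S k)%nat ltac:(lia) ltac:(lia)) eq_refl H1) as [_ [Hf Hb]].
    specialize (IHk H2).
    destruct (Dn_step sigma N k Hs HN) as [E1 [E2 E3]].
    pose proof (Dn_ge sigma N k Hs HN).
    replace (Dn sigma (N + S k) - Pf sigma N)%nat with
      ((Dn sigma (N + k) - Pf sigma N) + gap sigma (N + S k) + (N + S k))%nat by lia.
    apply agree_app. apply agree_app. auto.
    replace (S (Pf sigma N) + (Dn sigma (N + k) - Pf sigma N))%nat with
      (sigma (pred (N + S k)) + pred (N + S k))%nat by lia. auto.
    replace (S (Pf sigma N) + (Dn sigma (N + k) - Pf sigma N + gap sigma (N + S k)))%nat with
      (sigma (N + S k)%nat) by lia. auto.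
Qed.

Lemma full_agree sigma x y N k : sig_hyp sigma -> (1 <= N)%nat -> GN sigma N x -> GN sigma N y ->
  params sigma x N k = params sigma y N k -> agree x y 1 (Dn sigma (N + S k)).
Proof.
  intros Hs HN Gx Gy H. pose proof Gx as [HJx Hx]. pose proof Gy as [HJy Hy].
  unfold params in H. apply app_split in H.
  2: { rewrite !sparams_length, !digs_length. auto. }
  destruct H as [H1 H2].
  set (n := (N + S k)%nat) in *.
  destruct (sparams_agree sigma x y n _ _ HJx HJy Hs ltac:(unfold n; lia)
      (Hx n ltac:(unfold n; lia) ltac:(unfold n; lia)) (Hy n ltac:(unfold n; lia) ltac:(unfold n; lia))
      ltac:(rewrite !digs_length; auto) H1) as [He [Hf Hb]].
  pose proof (mp_agree sigma x y N Hs HN Gx Gy k H2) as Hm.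
  apply digs_agree in He.
  destruct (Dn_step sigma N k Hs HN) as [E1 [E2 E3]].
  pose proof (Dn_ge sigma N k Hs HN).
  fold n in E1, E2, E3.
  replace (Dn sigma n) with (Pf sigma N + (Dn sigma (N + k) - Pf sigma N) + gap sigma n + n)%nat by lia.
  apply agree_app. apply agree_app. apply agree_app. auto.
  replace (1 + Pf sigma N)%nat with (S (Pf sigma N)) by lia. auto.
  replace (1 + (Pf sigma N + (Dn sigma (N + k) - Pf sigma N)))%nat with (sigma (pred n) + pred n)%nat by lia. auto.
  replace (1 + (Pf sigma N + (Dn sigma (N + k) - Pf sigma N) + gap sigma n))%nat with (sigma n) by lia. auto.
Qed.

Lemma mids_in sigma N k m g : In (m, g) (mids sigma N k) -> (N < m <= N + k)%nat /\ g = gap sigma m.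
Proof.
  induction k; simpl; intros H. contradiction.
  destruct H as [H|H]. injection H as <- <-. split; auto. lia.
  apply IHk in H. lia.
Qed.

Lemma gap_bound sigma beta eta N1 :
  sig_hyp sigma ->
  (forall n, (N1 <= n)%nat -> Rabs ((INR (sigma (S n)) - INR (sigma n)) / INR n - beta) < eta) ->
  forall m, (S N1 <= m)%nat -> (2 <= m)%nat ->
    INR (gap sigma m) <= (beta - 1 + eta) * (INR m - 1).
Proof.
  intros [H1 H3] Hl m Hm1 Hm2.
  destruct m as [|n]. lia.
  specialize (Hl n ltac:(lia)). specialize (H3 n ltac:(lia)).
  unfold gap. simpl pred.
  assert (HnR : 0 < INR n) by (apply lt_0_INR; lia).
  rewrite !minus_INR by lia. rewrite S_INR.
  apply Rabs_def2 in Hl. destruct Hl as [Hl _].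
  assert (INR (sigma (S n)) - INR (sigma n) < (beta + eta) * INR n).
  { assert (Hq : (INR (sigma (S n)) - INR (sigma n)) / INR n * INR n = INR (sigma (S n)) - INR (sigma n)) by (field; lra).
    set (q := (INR (sigma (S n)) - INR (sigma n)) / INR n) in *.
    apply Rmult_lt_compat_r with (r := INR n) in Hl; auto. lra. }
  lra.
Qed.

Lemma J_a_ge1 x j : J_set x -> (1 <= cf_a j x)%nat.
Proof.
  intros HJ. destruct j. change (cf_a 0 x) with (cf_a 1 x). apply J_a1; auto.
  pose proof (J_ge x (S j) HJ ltac:(lia)). lia.
Qed.

Lemma Rpower_prodR g k L s : (forall j, 0 < g j) ->
  Rpower (prodR g k L) s = prodR (fun j => Rpower (g j) s) k L.
Proof.
  intros Hg. revert k; induction L; intros k; simpl. apply Rpower_1_l.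
  rewrite <- IHL. rewrite Rpower_mult_distr; auto.
  assert (forall k L, 0 < prodR g k L). { clear -Hg. intros k L; revert k; induction L; intros k; simpl. lra. apply Rmult_lt_0_compat; auto. }
  auto.
Qed.

Lemma prodR_pos f k L : (forall j, 0 < f j) -> 0 < prodR f k L.
Proof. intros H. revert k; induction L; intros k; simpl. lra. apply Rmult_lt_0_compat; auto. Qed.

Lemma inv_sq_pos x j : J_set x -> 0 < / INR (cf_a j x) ^ 2.
Proof.
  intros HJ. apply Rinv_0_lt_compat. apply pow_lt. apply lt_0_INR. pose proof (J_a_ge1 x j HJ). lia.
Qed.

Lemma Rpower_B t x D : J_set x -> 
  Rpower (prodR (fun j => / INR (cf_a j x) ^ 2) 1 D) (t / 2) = prodR (F t x) 1 D.
Proof.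
  intros HJ. rewrite Rpower_prodR by (intros; apply inv_sq_pos; auto).
  apply prodR_ext. intros j _. unfold F, rp.
  assert (0 < INR (cf_a j x)) by (apply lt_0_INR; pose proof (J_a_ge1 x j HJ); lia).
  rewrite <- Rpower_m2 by auto. rewrite Rpower_mult. f_equal. field.
Qed.

Theorem proposition3p2 (sigma : nat -> nat) (beta : R) :
  (forall n : nat, (1 <= n)%nat -> (0 < sigma n)%nat) ->
  (forall n : nat, (1 <= n)%nat -> (sigma n < sigma (S n))%nat) ->
  (forall n : nat, (1 <= n)%nat -> (sigma n + n <= sigma (S n))%nat) ->
  1 <= beta ->
  is_lim_seq (fun n : nat => (INR (sigma (S n)) - INR (sigma n)) / INR n) beta ->
  Rbar_le (hausdorff_dim (G_set sigma)) (Finite ((beta - 1) / (2 * beta))).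
Proof.
  intros H1 H2 H3 Hb Hlim.
  assert (Hs : sig_hyp sigma) by (split; auto).
  assert (Hbeta : 0 < beta) by lra.
  apply dim_le.
  { split. apply Rmult_le_pos. lra. left; apply Rinv_0_lt_compat; lra.
    apply Rmult_lt_reg_r with (2 * beta). lra. unfold Rdiv. rewrite Rmult_assoc, Rinv_l by lra. lra. }
  intros s [Hs1 Hs2].
  assert (Hb0 : 0 <= (beta - 1) / (2 * beta)).
  { apply Rmult_le_pos. lra. left; apply Rinv_0_lt_compat; lra. }
  assert (Hkey0 : beta - 1 < 2 * s * beta).
  { apply Rmult_lt_compat_r with (r := 2 * beta) in Hs1; [|lra].
    unfold Rdiv in Hs1. rewrite Rmult_assoc, Rinv_l in Hs1 by lra. lra. }
  set (t := 2 * s).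
  assert (Ht : 0 < t < 1) by (unfold t; lra).
  assert (Hkey : 0 < t - (1 - t) * (beta - 1)) by (unfold t; nra).
  set (eta := (t - (1 - t) * (beta - 1)) / (2 * (1 - t))).
  assert (Heta : 0 < eta) by (unfold eta; apply Rdiv_lt_0_compat; lra).
  set (gam := beta - 1 + eta).
  assert (Hgam : 0 <= gam) by (unfold gam; lra).
  assert (Hkap : 0 < t - (1 - t) * gam).
  { unfold gam, eta. replace (t - (1 - t) * (beta - 1 + (t - (1 - t) * (beta - 1)) / (2 * (1 - t))))
      with ((t - (1 - t) * (beta - 1)) / 2) by (field; lra). lra. }
  apply is_lim_seq_spec in Hlim. destruct (Hlim (mkposreal eta Heta)) as [N1 HN1]. simpl in HN1.
  pose proof (gap_bound sigma beta eta N1 Hs HN1) as Hgap. fold gam in Hgap.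
  destruct (Q_small t gam 0 0 Ht Hgam ltac:(lra) Hkap) as [Th0 HTh0].
  destruct (INR_unbounded Th0) as [N0' HN0'].
  set (N0 := (N0' + N1 + 2)%nat).
  assert (Hmid : forall m M, (N0 <= m)%nat -> bsum (2 + gap sigma m) M (stagew t m) <= 1).
  { intros m M Hm.
    assert (HmR : Th0 <= INR m).
    { assert (INR N0' <= INR m) by (apply le_INR; unfold N0 in Hm; lia). lra. }
    assert (Hg : INR (gap sigma m) <= gam * (INR m - 1) + 0).
    { rewrite Rplus_0_r. apply Hgap; unfold N0 in Hm; lia. }
    destruct (HTh0 m (gap sigma m) HmR Hg) as [HE Hq].
    eapply Rle_trans. apply stage_bound; auto. unfold N0 in Hm; lia.
    rewrite Ropp_0, exp_0 in Hq. auto. }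
  apply meas_zero. lra.
  intros delta eps Hd Heps.
  assert (HP : forall N, exists k,
    (forall M, bsum (2 + (gap sigma (N + N0 + S k) + Pf sigma (N + N0))) M (stagew t (N + N0 + S k))
                 <= eps / 2 ^ (S N)) /\ / INR (N + N0 + S k) <= delta).
  { intros N.
    destruct (Q_small t gam (INR (Pf sigma (N + N0))) (- ln (eps / 2 ^ (S N))) Ht Hgam (pos_INR _) Hkap)
      as [Th HTh].
    destruct (INR_unbounded (Rmax Th (/ delta))) as [k Hk]. exists k.
    set (n := (N + N0 + S k)%nat).
    assert (Hkn : INR k <= INR n) by (apply le_INR; unfold n; lia).
    assert (HnTh : Th <= INR n) by (pose proof (Rmax_l Th (/ delta)); lra).
    assert (Hnd : / delta < INR n) by (pose proof (Rmax_r Th (/ delta)); lra).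
    split.
    - intros M.
      assert (Hg : INR (gap sigma n + Pf sigma (N + N0)) <= gam * (INR n - 1) + INR (Pf sigma (N + N0))).
      { rewrite plus_INR. assert (INR (gap sigma n) <= gam * (INR n - 1)) by (apply Hgap; unfold n, N0; lia). lra. }
      destruct (HTh n _ HnTh Hg) as [HE Hq].
      rewrite Ropp_involutive, exp_ln in Hq.
      2: { apply Rdiv_lt_0_compat; auto. apply pow_lt; lra. }
      eapply Rle_trans. apply stage_bound; auto. unfold n; lia. auto.
    - assert (0 < / delta) by (apply Rinv_0_lt_compat; auto).
      rewrite <- (Rinv_inv delta). apply Rinv_le_contravar; lra. }
  set (kf := fun N => proj1_sig (constructive_indefinite_description _ (HP N))).
  assert (Hkf : forall N,
    (forall M, bsum (2 + (gap sigma (N + N0 + S (kf N)) + Pf sigma (N + N0))) M (stagew t (N + N0 + S (kf N)))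
                 <= eps / 2 ^ (S N)) /\ / INR (N + N0 + S (kf N)) <= delta).
  { intros N. unfold kf. destruct (constructive_indefinite_description _ (HP N)) as [k Hk]. simpl. auto. }
  clearbody kf.
  set (Lf := fun N => Lst (stg sigma (N + N0) (kf N))).
  set (om := fun N l => wt t (stg sigma (N + N0) (kf N)) l).
  set (U := fun i x => valid Lf i = true /\ GN sigma (fst (ecode Lf i) + N0) x /\
              params sigma x (fst (ecode Lf i) + N0) (kf (fst (ecode Lf i))) = snd (ecode Lf i)).
  assert (Hclaim : forall i, Rbar_le (diam (U i)) (Finite delta) /\ diam_pow s (U i) <= Wt Lf om i).
  { intros i. destruct (classic (exists x0, U i x0)) as [[x0 Hx0]|Hne].
    - pose proof Hx0 as [Hv [HG0 Hp0]].
      set (N := fst (ecode Lf i)) in *.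
      set (k := kf N) in *.
      set (n := (N + N0 + S k)%nat).
      set (D := Dn sigma n).
      set (B := prodR (fun j => / INR (cf_a j x0) ^ 2) 1 D).
      assert (HJ0 : J_set x0) by (destruct HG0; auto).
      assert (Hag : forall x, U i x -> agree x x0 1 D).
      { intros x [_ [HGx Hpx]]. unfold D, n. fold N in HGx, Hpx. fold k in Hpx.
        apply (full_agree sigma x x0 (N + N0) k Hs ltac:(unfold N0; lia) HGx HG0).
        rewrite Hpx, Hp0. auto. }
      assert (HBpos : 0 < B).
      { unfold B. apply prodR_pos. intros j; apply inv_sq_pos; auto. }
      assert (Hxy : forall x y, U i x -> U i y -> Rabs (x - y) <= B).
      { intros x y Hx Hy. pose proof (Hag x Hx) as Ax. pose proof (Hag y Hy) as Ay.
        assert (HJx : J_set x) by (destruct Hx as [_ [[? _] _]]; auto).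
        assert (HJy : J_set y) by (destruct Hy as [_ [[? _] _]]; auto).
        eapply Rle_trans. apply (cylinder D). apply J_good; auto. apply J_good; auto.
        intros j Hj. rewrite (Ax j), (Ay j); auto; lia.
        right. unfold B. apply prodR_ext. intros j Hj. rewrite (Ax j); auto; lia. }
      destruct (diam_bound s (U i) B ltac:(lra) HBpos Hxy) as [Hdm Hdp].
      assert (HBd : B <= delta).
      { destruct (Hkf N) as [_ Hdel]. fold k in Hdel. fold n in Hdel.
        assert (Hn1 : (1 <= n)%nat) by (unfold n; lia).
        assert (Hsn : (n <= sigma n)%nat) by (apply sig_ge; auto).
        eapply Rle_trans. apply (prodR_le_factor _ 1 D (sigma n)).
        { intros j. split. left; apply inv_sq_pos; auto.
          rewrite <- Rinv_1. apply Rinv_le_contravar. lra.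
          assert (1 <= INR (cf_a j x0)) by (apply (le_INR 1); apply J_a_ge1; auto). nra. }
        { unfold D, Dn. lia. }
        eapply Rle_trans; [|apply Hdel].
        assert (HnR : 1 <= INR n) by (apply (le_INR 1); auto).
        assert (INR n <= INR (cf_a (sigma n) x0)).
        { apply le_INR. pose proof (J_ge x0 (sigma n) HJ0 ltac:(lia)). lia. }
        apply Rinv_le_contravar. lra. nra. }
      split.
      + eapply Rbar_le_trans. apply Hdm. simpl. auto.
      + eapply Rle_trans. apply Hdp.
        replace s with (t / 2) by (unfold t; field).
        unfold B. rewrite Rpower_B by auto.
        unfold Wt. rewrite Hv. fold N. unfold om. fold k.
        rewrite <- Hp0. unfold D, n. apply full_le; auto. lra. unfold N0; lia.
    - split.
      + destruct (diam_bound s (U i) delta ltac:(lra) Hd) as [Hdm _].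
        { intros x y Hx. exfalso. apply Hne. exists x; auto. }
        auto.
      + unfold diam_pow. destruct excluded_middle_informative as [Hex|_]. contradiction.
        unfold Wt. destruct valid. apply wt_nonneg. lra. }
  exists U. split; [intros i; apply Hclaim|]. split.
  - intros x [HJ [Nx HNx]].
    set (l := params sigma x (Nx + N0) (kf Nx)).
    destruct (ecode_surj Lf Nx l (params_length sigma x (Nx + N0) (kf Nx))) as [i [Hv He]].
    exists i. unfold U. rewrite He. simpl. split; auto. split; auto.
    split; auto. intros m Hm1 Hm2. apply HNx; auto. lia.
  - intros K. apply Rle_trans with (sum_f_R0 (Wt Lf om) K).
    apply sum_Rle; intros; apply Hclaim.
    apply Wt_sum; auto.
    + intros N l. apply wt_nonneg.
    + intros N M. unfold om, Lf, stg. rewrite bsum_wt.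
      destruct (Hkf N) as [HF _].
      assert (Hm : bsum (Lst (mids sigma (N + N0) (kf N))) M (wt t (mids sigma (N + N0) (kf N))) <= 1).
      { apply mids_bound. intros m g Hin. apply mids_in in Hin. destruct Hin as [Hm ->].
        apply Hmid. lia. }
      assert (0 <= bsum (Lst (mids sigma (N + N0) (kf N))) M (wt t (mids sigma (N + N0) (kf N))))
        by (apply bsum_nonneg; intros; apply wt_nonneg).
      specialize (HF M).
      assert (0 <= bsum (2 + (gap sigma (N + N0 + S (kf N)) + Pf sigma (N + N0))) M (stagew t (N + N0 + S (kf N))))
        by (apply bsum_nonneg; intros; apply stagew_nonneg).
      nra.
Qed.
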